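(* Let $(X,\mathcal{U})$ be a uniform space with $\mathcal{F}$, $\mathcal{V}$, $G$ as in the context, and let $T:X\to X$ be a Ćirić-$G$-contraction. Then for every $x\in X_T$ the sequence $\{T^nx\}$ is Cauchy in $X$.
   Context: A uniform space $(X,\mathcal{U})$ is a nonempty set $X$ with a uniformity $\mathcal{U}$ on $X$. For $U,V\subseteq X\times X$, $\Delta(X)=\{(x,x):x\in X\}$ and $U\circ V=\{(x,y):\exists z\in X,\ (x,z)\in V,\ (z,y)\in U\}$. A sequence $\{x_n\}$ is Cauchy if for every $U\in\mathcal{U}$ there is $N$ with $(x_m,x_n)\in U$ for $m,n\ge N$. $\mathcal{F}$ is a nonempty collection of (uniformly continuous) pseudometrics on $X$ generating $\mathcal{U}$, and $\mathcal{V}$ is the family of all sets $V=\bigcap_{i=1}^m\{(x,y)\in X\times X:\rho_i(x,y)<r_i\}$ with $m\ge1$, $\rho_i\in\mathcal{F}$, $r_i>0$; $\mathcal{V}$ is a base for $\mathcal{U}$. For such $V$ and $\beta>0$, $\beta V=\bigcap_{i=1}^m\{(x,y):\rho_i(x,y)<\beta r_i\}$. $G$ is a directed graph without parallel edges with vertex set $X$ and edge set $E(G)\subseteq X\times X$ containing $\Delta(X)$. For $T:X\to X$, $X_T=\{x\in X:(x,Tx)\in E(G)\}$. A map $T:X\to X$ is a Ćirić-$G$-contraction if (C1) $(x,y)\in E(G)$ implies $(Tx,Ty)\in E(G)$; and (C2) there are positive-valued functions $a_1,a_2,a_3,a_4$ on $X\times X$ with $\sup\{a_1(x,y)+a_2(x,y)+a_3(x,y)+2a_4(x,y):x,y\in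 X\}=\alpha<1$ such that for all $x,y\in X$ and all $V_1,\dots,V_5\in\mathcal{V}$: if $(x,y)\in E(G)\cap V_1$, $(x,Tx)\in V_2$, $(y,Ty)\in V_3$, $(x,Ty)\in V_4$, $(y,Tx)\in V_5$, then $(Tx,Ty)\in a_1(x,y)V_1\circ a_2(x,y)V_2\circ a_3(x,y)V_3\circ a_4(x,y)V_4\circ a_4(x,y)V_5$. *)

(* Defs.v *)
From Stdlib Require Import Reals List.
Open Scope R_scope.

Definition is_pseudometric {X : Type} (rho : X -> X -> R) : Prop :=
  (forall x, rho x x = 0) /\
  (forall x y, 0 <= rho x y) /\
  (forall x y, rho x y = rho y x) /\
  (forall x y z, rho x z <= rho x y + rho y z).

Definition rel (X : Type) := X -> X -> Prop.

Definition rcomp {X : Type} (U V : rel X) : rel X :=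
  fun x y => exists z, V x z /\ U z y.

(* A member of the base family 𝒱 is presented by a nonempty finite list
   [(rho_1,r_1); ...; (rho_m,r_m)] with rho_i in F and r_i > 0. *)
Definition base_rep (X : Type) := list ((X -> X -> R) * R).

Definition is_base_rep {X : Type} (F : (X -> X -> R) -> Prop)
  (v : base_rep X) : Prop :=
  v <> nil /\ forall p, In p v -> F (fst p) /\ 0 < snd p.

(* beta V = ⋂_i {(x,y) : rho_i(x,y) < beta r_i};  V itself is 1 V. *)
Definition scaled_set {X : Type} (beta : R) (v : base_rep X) : rel X :=
  fun x y => forall p, In p v -> fst p x y < beta * snd p.

Definition base_set {X : Type} (v : base_rep X) : rel X := scaled_set 1 v.

Definition in_uniformity {X : Type} (F : (X -> X -> R) -> Prop)
  (U : rel X) : Prop :=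
  exists v, is_base_rep F v /\ forall x y, base_set v x y -> U x y.

Definition cauchy_seq {X : Type} (F : (X -> X -> R) -> Prop)
  (s : nat -> X) : Prop :=
  forall U, in_uniformity F U ->
    exists N, forall m n, (N <= m)%nat -> (N <= n)%nat -> U (s m) (s n).

(* Ćirić-G-contraction; E is the edge set of G. *)
Definition ciric_G_contraction {X : Type} (F : (X -> X -> R) -> Prop)
  (E : rel X) (T : X -> X) : Prop :=
  (forall x y, E x y -> E (T x) (T y)) /\
  exists (a1 a2 a3 a4 : X -> X -> R) (alpha : R),
    (forall x y, 0 < a1 x y /\ 0 < a2 x y /\ 0 < a3 x y /\ 0 < a4 x y) /\
    is_lub (fun s => exists x y,
              s = a1 x y + a2 x y + a3 x y + 2 * a4 x y) alpha /\
    alpha < 1 /\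
    forall x y (v1 v2 v3 v4 v5 : base_rep X),
      is_base_rep F v1 -> is_base_rep F v2 -> is_base_rep F v3 ->
      is_base_rep F v4 -> is_base_rep F v5 ->
      E x y -> base_set v1 x y ->
      base_set v2 x (T x) -> base_set v3 y (T y) ->
      base_set v4 x (T y) -> base_set v5 y (T x) ->
      rcomp (scaled_set (a1 x y) v1)
        (rcomp (scaled_set (a2 x y) v2)
          (rcomp (scaled_set (a3 x y) v3)
            (rcomp (scaled_set (a4 x y) v4) (scaled_set (a4 x y) v5))))
        (T x) (T y).

(* Main.v *)
Require Import Defs.
From Stdlib Require Import Reals List Lra Lia.
Open Scope R_scope.

Lemma single_scaled {X : Type} (rho : X -> X -> R) (r a : R) (u w : X) :
  scaled_set a ((rho, r) :: nil) u w -> rho u w < a * r.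
Proof. intros H. apply (H (rho, r)). left; reflexivity. Qed.

Lemma single_base {X : Type} (rho : X -> X -> R) (r : R) (u w : X) :
  rho u w < r -> base_set ((rho, r) :: nil) u w.
Proof. intros H p [<-|[]]. simpl. lra. Qed.

Lemma single_rep {X : Type} (F : (X -> X -> R) -> Prop) rho r :
  F rho -> 0 < r -> is_base_rep F ((rho, r) :: nil).
Proof.
  intros HF Hr. split. discriminate. intros p [<-|[]]. simpl; auto.
Qed.

Lemma step_ineq (X : Type) (F : (X -> X -> R) -> Prop)
  (HFpm : forall rho, F rho -> is_pseudometric rho)
  (E : X -> X -> Prop) (T : X -> X) (a1 a2 a3 a4 : X -> X -> R)
  (Hpos : forall x y, 0 < a1 x y /\ 0 < a2 x y /\ 0 < a3 x y /\ 0 < a4 x y)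
  (Hc : forall x y (v1 v2 v3 v4 v5 : base_rep X),
      is_base_rep F v1 -> is_base_rep F v2 -> is_base_rep F v3 ->
      is_base_rep F v4 -> is_base_rep F v5 ->
      E x y -> base_set v1 x y ->
      base_set v2 x (T x) -> base_set v3 y (T y) ->
      base_set v4 x (T y) -> base_set v5 y (T x) ->
      rcomp (scaled_set (a1 x y) v1)
        (rcomp (scaled_set (a2 x y) v2)
          (rcomp (scaled_set (a3 x y) v3)
            (rcomp (scaled_set (a4 x y) v4) (scaled_set (a4 x y) v5))))
        (T x) (T y))
  rho x y : F rho -> E x y ->
  rho (T x) (T y) <= a1 x y * rho x y + a2 x y * rho x (T x)
     + a3 x y * rho y (T y) + a4 x y * (rho x (T y) + rho y (T x)).
Proof.
  intros HF HE.
  destruct (HFpm rho HF) as (H0 & Hnn & Hsym & Htri).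
  destruct (Hpos x y) as (p1 & p2 & p3 & p4).
  apply Rle_plus_epsilon. intros eps Heps.
  set (K := a1 x y + a2 x y + a3 x y + 2 * a4 x y).
  assert (HK : 0 < K) by (unfold K; lra).
  set (e := eps / K).
  assert (He : 0 < e) by (unfold e; apply Rdiv_lt_0_compat; lra).
  assert (HeK : e * K = eps) by (unfold e; field; lra).
  pose proof (Hnn x y). pose proof (Hnn x (T x)). pose proof (Hnn y (T y)).
  pose proof (Hnn x (T y)). pose proof (Hnn y (T x)).
  destruct (Hc x y ((rho, rho x y + e)::nil) ((rho, rho x (T x) + e)::nil)
     ((rho, rho y (T y) + e)::nil) ((rho, rho x (T y) + e)::nil)
     ((rho, rho y (T x) + e)::nil)) as [z1 [Hz1 A1]];
   try (apply single_rep; [assumption|lra]);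
   try (apply single_base; lra); try assumption.
  destruct Hz1 as [z2 [Hz2 A2]].
  destruct Hz2 as [z3 [Hz3 A3]].
  destruct Hz3 as [z4 [A5 A4]].
  apply single_scaled in A1. apply single_scaled in A2.
  apply single_scaled in A3. apply single_scaled in A4. apply single_scaled in A5.
  pose proof (Htri (T x) z4 (T y)).
  pose proof (Htri z4 z3 (T y)).
  pose proof (Htri z3 z2 (T y)).
  pose proof (Htri z2 z1 (T y)).
  assert (Hexp : a1 x y * (rho x y + e) + a2 x y * (rho x (T x) + e) +
     a3 x y * (rho y (T y) + e) + a4 x y * (rho x (T y) + e) + a4 x y * (rho y (T x) + e)
     = a1 x y * rho x y + a2 x y * rho x (T x)
     + a3 x y * rho y (T y) + a4 x y * (rho x (T y) + rho y (T x)) + e * K)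
    by (unfold K; ring).
  lra.
Qed.

Theorem lemma3 (X : Type) (x0 : X)
  (F : (X -> X -> R) -> Prop)
  (HFpm : forall rho, F rho -> is_pseudometric rho)
  (HFne : exists rho, F rho)
  (E : X -> X -> Prop) (HErefl : forall x, E x x)
  (T : X -> X) (HT : ciric_G_contraction F E T) :
  forall x, E x (T x) -> cauchy_seq F (fun n => Nat.iter n T x).
Proof.
  intros x Hx.
  destruct HT as [HTE [a1 [a2 [a3 [a4 [alpha [Hpos [Hlub [Halpha Hc]]]]]]]]].
  set (s := fun n => Nat.iter n T x).
  assert (Hs : forall n, s (S n) = T (s n)) by reflexivity.
  assert (HEs : forall n, E (s n) (s (S n))).
  { induction n. exact Hx. rewrite !Hs. apply HTE. exact IHn. }
  assert (Hub : forall u w, a1 u w + a2 u w + a3 u w + 2 * a4 u w <= alpha).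
  { intros u w. apply (proj1 Hlub). exists u, w. reflexivity. }
  assert (Ha0 : 0 <= alpha).
  { pose proof (Hub x x). destruct (Hpos x x) as (?&?&?&?). lra. }
  assert (Hrho : forall rho, F rho -> forall r, 0 < r ->
     exists N, forall m n, (N <= m)%nat -> (N <= n)%nat -> rho (s m) (s n) < r).
  { intros rho HF r Hr.
    destruct (HFpm rho HF) as (H0 & Hnn & Hsym & Htri).
    assert (Hd : forall n, rho (s (S n)) (s (S (S n))) <= alpha * rho (s n) (s (S n))).
    { intro n.
      pose proof (step_ineq X F HFpm E T a1 a2 a3 a4 Hpos Hc rho (s n) (s (S n)) HF (HEs n)) as H.
      rewrite <- !Hs in H.
      rewrite H0 in H.
      pose proof (Htri (s n) (s (S n)) (s (S (S n)))).
      pose proof (Hub (s n) (s (S n))).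
      destruct (Hpos (s n) (s (S n))) as (p1&p2&p3&p4).
      set (d0 := rho (s n) (s (S n))) in *.
      set (d1 := rho (s (S n)) (s (S (S n)))) in *.
      set (q := rho (s n) (s (S (S n)))) in *.
      set (b1 := a1 (s n) (s (S n))) in *.
      set (b2 := a2 (s n) (s (S n))) in *.
      set (b3 := a3 (s n) (s (S n))) in *.
      set (b4 := a4 (s n) (s (S n))) in *.
      assert (Hd0 : 0 <= d0) by apply Hnn. assert (Hd1 : 0 <= d1) by apply Hnn.
      assert (Hq : b4 * q <= b4 * (d0 + d1)) by (apply Rmult_le_compat_l; lra).
      assert (K1 : (1 - b3 - b4) * d1 <= (b1 + b2 + b4) * d0) by nra.
      assert (K2 : (b1 + b2 + b4) * d0 <= (alpha - b3 - b4) * d0)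
        by (apply Rmult_le_compat_r; lra).
      assert (K3 : (alpha - b3 - b4) * d0 <= alpha * (1 - b3 - b4) * d0) by (assert (0 <= (b3 + b4) * (1 - alpha) * d0) by (apply Rmult_le_pos; [apply Rmult_le_pos|]; lra); nra).
      assert (K4 : (1 - b3 - b4) * d1 <= (1 - b3 - b4) * (alpha * d0)) by nra.
      apply Rmult_le_reg_l in K4; lra. }
    set (D := rho (s 0%nat) (s 1%nat)).
    assert (HD : 0 <= D) by apply Hnn.
    assert (Hdn : forall n, rho (s n) (s (S n)) <= D * alpha ^ n).
    { induction n. rewrite pow_O, Rmult_1_r; apply Rle_refl.
      pose proof (Hd n). assert (alpha * rho (s n) (s (S n)) <= alpha * (D * alpha ^ n)) by (apply Rmult_le_compat_l; lra). rewrite <- tech_pow_Rmult. lra. }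
    assert (Hmk : forall m k, (1 - alpha) * rho (s m) (s (m + k)%nat) <= D * alpha ^ m * (1 - alpha ^ k)).
    { intros m k. induction k.
      - rewrite Nat.add_0_r, H0. simpl. lra.
      - replace (m + S k)%nat with (S (m + k)) by lia.
        pose proof (Htri (s m) (s (m + k)%nat) (s (S (m + k)))).
        pose proof (Hdn (m + k)%nat) as Hdk. rewrite pow_add in Hdk.
        set (A := rho (s m) (s (S (m + k)))) in *.
        set (B := rho (s m) (s (m + k)%nat)) in *.
        set (C := rho (s (m + k)%nat) (s (S (m + k)))) in *.
        assert (K1 : (1 - alpha) * A <= (1 - alpha) * (B + C)) by (apply Rmult_le_compat_l; lra).
        assert (K2 : (1 - alpha) * C <= (1 - alpha) * (D * (alpha ^ m * alpha ^ k)))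
          by (apply Rmult_le_compat_l; lra).
        rewrite <- tech_pow_Rmult.
        assert (E1 : D * alpha ^ m * (1 - alpha * alpha ^ k) =
           D * alpha ^ m * (1 - alpha ^ k) + (1 - alpha) * (D * (alpha ^ m * alpha ^ k))) by ring.
        lra. }
    assert (Hmk' : forall m k, (1 - alpha) * rho (s m) (s (m + k)%nat) <= D * alpha ^ m).
    { intros m k. pose proof (Hmk m k). pose proof (pow_le alpha k Ha0).
      pose proof (pow_le alpha m Ha0). assert (0 <= D * alpha ^ m * alpha ^ k) by (apply Rmult_le_pos; [apply Rmult_le_pos|]; lra). nra. }
    assert (Hy : 0 < (1 - alpha) * r / (D + 1)).
    { apply Rdiv_lt_0_compat; nra. }
    assert (Habs : Rabs alpha < 1) by (rewrite Rabs_pos_eq; lra).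
    destruct (pow_lt_1_zero alpha Habs _ Hy) as [N HN].
    assert (Hbound : forall m k, (N <= m)%nat -> rho (s m) (s (m + k)%nat) < r).
    { intros m k Hm. pose proof (HN m Hm) as Hp.
      rewrite Rabs_pos_eq in Hp by (apply pow_le; lra).
      pose proof (Hmk' m k).
      assert (Hp2 : (D + 1) * alpha ^ m < (1 - alpha) * r).
      { apply (Rmult_lt_compat_l (D + 1)) in Hp; [|lra].
        replace ((D + 1) * ((1 - alpha) * r / (D + 1))) with ((1 - alpha) * r) in Hp
          by (field; lra). exact Hp. }
      pose proof (pow_le alpha m Ha0).
      assert (H5 : (1 - alpha) * rho (s m) (s (m + k)%nat) < (1 - alpha) * r) by nra.
      apply Rmult_lt_reg_l in H5; lra. }
    exists N. intros m n Hm Hn.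
    destruct (Nat.le_ge_cases m n) as [Hmn|Hmn].
    - replace n with (m + (n - m))%nat by lia. apply Hbound; lia.
    - rewrite Hsym. replace m with (n + (m - n))%nat by lia. apply Hbound; lia. }
  intros U [v [[_ Hv] HU]].
  assert (Hall : exists N, forall m n, (N <= m)%nat -> (N <= n)%nat ->
            forall p, In p v -> fst p (s m) (s n) < snd p).
  { clear HU. induction v as [|p v IH].
    - exists 0%nat. intros m n _ _ p [].
    - destruct IH as [N1 HN1].
      { intros q Hq. apply Hv. right; exact Hq. }
      destruct (Hv p (or_introl eq_refl)) as [HFp Hrp].
      destruct (Hrho _ HFp _ Hrp) as [N2 HN2].
      exists (Nat.max N1 N2). intros m n Hm Hn q [<-|Hq].
      + apply HN2; lia.
      + apply HN1; auto; lia. }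
  destruct Hall as [N HN]. exists N. intros m n Hm Hn. apply HU.
  intros p Hp. rewrite Rmult_1_l. apply HN; auto.
Qed.
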